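(* Let $\alpha$ be a nonzero real number and let $\gamma(t)=\Psi(u(t),v(t))$ be a regular curve in $\mathbb S^2$ not passing through $N$. Then $\gamma$ is an $\alpha$-stationary curve if and only if its curvature satisfies $$\kappa=\alpha\,\frac{\langle\mathbf n,\xi\rangle}{\mathsf d}.$$ Here $\mathbf n$ is the unit normal of $\gamma$, $\mathsf d$ is the spherical distance from $\gamma(t)$ to $N$, and $\xi$ is the unit tangent vector at $\gamma(t)$ of the minimizing geodesic joining $N$ and $\gamma(t)$.
   Context: $\mathbb S^2\subset\mathbb R^3$ is the unit sphere with the Euclidean inner product $\langle,\rangle$. It is parametrized by $\Psi(u,v)=(\sin u\cos v,\sin u\sin v,\cos u)$, and $N=(0,0,1)$. The spherical distance from $\Psi(u,v)$, $u\in[0,\pi]$, to $N$ is $u$. For $p=\Psi(u,v)$ with $0<u<\pi$, set $\xi(p)=\Psi_u(u,v)=(\cos u\cos v,\cos u\sin v,-\sin u)$; this is the unit tangent of the minimizing geodesic from $N$ to $p$, pointing away from $N$. For a regular curve $\gamma(t)=\Psi(u(t),v(t))$, we have $|\gamma'|=\sqrt{u'^2+\sin^2(u)v'^2}$. Its unit normal is $\mathbf n=(\gamma'\times\gamma)/|\gamma'|$, with $\times$ the Euclidean cross product. Its curvature is $$\kappa=\frac{\langle\gamma'',\mathbf n\rangle}{|\gamma'|^2}=\frac{\det(\gamma'',\gamma',\gamma)}{|\gamma'|^3}.$$ The energy is $$E_\alpha[\gamma]=\int_\gamma\mathsf d^\alpha ds=\int u^\alpha\sqrt{u'^2+\sin^2(u)v'^2}\,dt.$$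 The curve is $\alpha$-stationary if it is a critical point of $E_\alpha$, i.e. $(u,v)$ satisfies its Euler–Lagrange equations. Throughout the paper, $\alpha\neq0$ and curves avoid $N$. *)

(* Defs.v *)
From Stdlib Require Import Reals Lra.
From Coquelicot Require Import Coquelicot.
Open Scope R_scope.

Definition vec3 := (R * R * R)%type.
Definition vx (a : vec3) : R := fst (fst a).
Definition vy (a : vec3) : R := snd (fst a).
Definition vz (a : vec3) : R := snd a.
Definition mk3 (x y z : R) : vec3 := (x, y, z).

Definition dot3 (a b : vec3) : R := vx a * vx b + vy a * vy b + vz a * vz b.
Definition cross3 (a b : vec3) : vec3 :=
  mk3 (vy a * vz b - vz a * vy b)
      (vz a * vx b - vx a * vz b)
      (vx a * vy b - vy a * vx b).
Definition norm3 (a : vec3) : R := sqrt (dot3 a a).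
Definition scal3 (c : R) (a : vec3) : vec3 := mk3 (c * vx a) (c * vy a) (c * vz a).

(* Parametrization of S^2 and the field xi = Psi_u. *)
Definition Psi (u v : R) : vec3 := mk3 (sin u * cos v) (sin u * sin v) (cos u).
Definition Psi_u (u v : R) : vec3 := mk3 (cos u * cos v) (cos u * sin v) (- sin u).

Definition dcurve (g : R -> vec3) (t : R) : vec3 :=
  mk3 (Derive (fun s => vx (g s)) t)
      (Derive (fun s => vy (g s)) t)
      (Derive (fun s => vz (g s)) t).

Definition curve (u v : R -> R) (t : R) : vec3 := Psi (u t) (v t).
Definition vel (u v : R -> R) (t : R) : vec3 := dcurve (curve u v) t.
Definition acc (u v : R -> R) (t : R) : vec3 := dcurve (vel u v) t.

Definition unit_normal (u v : R -> R) (t : R) : vec3 :=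
  scal3 (/ norm3 (vel u v t)) (cross3 (vel u v t) (curve u v t)).

Definition curvature (u v : R -> R) (t : R) : R :=
  dot3 (acc u v t) (unit_normal u v t) / (norm3 (vel u v t)) ^ 2.

Definition xi_along (u v : R -> R) (t : R) : vec3 := Psi_u (u t) (v t).

(* spherical distance from Psi(u,v) to N, for u in [0,pi], is u *)
Definition dist_N (u v : R -> R) (t : R) : R := u t.

(* Lagrangian of E_alpha in coordinates (u, v, u', v'). *)
Definition Lag (alpha : R) (x1 x2 y1 y2 : R) : R :=
  Rpower x1 alpha * sqrt (y1 ^ 2 + (sin x1) ^ 2 * y2 ^ 2).

Definition L_u  alpha x1 x2 y1 y2 := Derive (fun s => Lag alpha s x2 y1 y2) x1.
Definition L_v  alpha x1 x2 y1 y2 := Derive (fun s => Lag alpha x1 s y1 y2) x2.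
Definition L_u' alpha x1 x2 y1 y2 := Derive (fun s => Lag alpha x1 x2 s y2) y1.
Definition L_v' alpha x1 x2 y1 y2 := Derive (fun s => Lag alpha x1 x2 y1 s) y2.

Definition stationary (alpha a b : R) (u v : R -> R) : Prop :=
  forall t, a < t < b ->
    is_derive (fun s => L_u' alpha (u s) (v s) (Derive u s) (Derive v s)) t
              (L_u alpha (u t) (v t) (Derive u t) (Derive v t)) /\
    is_derive (fun s => L_v' alpha (u s) (v s) (Derive u s) (Derive v s)) t
              (L_v alpha (u t) (v t) (Derive u t) (Derive v t)).

(* Main.v *)
Require Import Defs.
From Stdlib Require Import Reals.
From Stdlib Require Import Lra.
From Coquelicot Require Import Coquelicot.
Open Scope R_scope.

Ltac eta_clean := repeat match goal with
  | |- context [fun x : R => ?f x] => change (fun x : R => f x) with f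
  end.

Lemma vel_eq (u v : R -> R) t : ex_derive u t -> ex_derive v t ->
  vel u v t = mk3 (cos (u t) * cos (v t) * Derive u t - sin (u t) * sin (v t) * Derive v t)
                  (cos (u t) * sin (v t) * Derive u t + sin (u t) * cos (v t) * Derive v t)
                  (- sin (u t) * Derive u t).
Proof.
intros Hu Hv. unfold vel, dcurve, curve, Psi, mk3, vx, vy, vz; simpl.
f_equal; [f_equal|]; apply is_derive_unique; auto_derive; auto; eta_clean; ring.
Qed.

Lemma loc_int a b t : a < t < b -> locally t (fun s => a < s < b).
Proof.
intros [H1 H2].
assert (He : 0 < Rmin (t - a) (b - t)) by (apply Rmin_pos; lra).
exists (mkposreal _ He). intros s Hs. simpl in Hs.
unfold ball in Hs; simpl in Hs; unfold AbsRing_ball, abs, minus, plus, opp in Hs; simpl in Hs.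
pose proof (Rmin_l (t-a) (b-t)). pose proof (Rmin_r (t-a) (b-t)).
apply Rabs_def2 in Hs. lra.
Qed.

Section S.
Variables (a b : R) (u v : R -> R).
Hypothesis Hd : forall t, a < t < b ->
     ex_derive u t /\ ex_derive (Derive u) t /\
     ex_derive v t /\ ex_derive (Derive v) t.

Lemma acc_eq t : a < t < b ->
  acc u v t = mk3
   (Derive (fun s => cos (u s) * cos (v s) * Derive u s - sin (u s) * sin (v s) * Derive v s) t)
   (Derive (fun s => cos (u s) * sin (v s) * Derive u s + sin (u s) * cos (v s) * Derive v s) t)
   (Derive (fun s => - sin (u s) * Derive u s) t).
Proof.
intros Ht. unfold acc, dcurve. unfold mk3. f_equal; [f_equal|]; apply Derive_ext_loc;
  generalize (loc_int a b t Ht); apply filter_imp;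
  intros s Hs; destruct (Hd s Hs) as (H1&H2&H3&H4); rewrite vel_eq; auto.
Qed.
End S.

Lemma acc_eq2 a b u v t : (forall t, a < t < b ->
     ex_derive u t /\ ex_derive (Derive u) t /\
     ex_derive v t /\ ex_derive (Derive v) t) -> a < t < b ->
  let u0 := u t in let v0 := v t in let u1 := Derive u t in let v1 := Derive v t in
  let u2 := Derive (Derive u) t in let v2 := Derive (Derive v) t in
  acc u v t = mk3
   (- sin u0 * u1 * cos v0 * u1 - cos u0 * sin v0 * v1 * u1 + cos u0 * cos v0 * u2
     - (cos u0 * u1 * sin v0 * v1 + sin u0 * cos v0 * v1 * v1 + sin u0 * sin v0 * v2))
   (- sin u0 * u1 * sin v0 * u1 + cos u0 * cos v0 * v1 * u1 + cos u0 * sin v0 * u2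
     + cos u0 * u1 * cos v0 * v1 - sin u0 * sin v0 * v1 * v1 + sin u0 * cos v0 * v2)
   (- cos u0 * u1 * u1 - sin u0 * u2).
Proof.
intros Hd Ht. destruct (Hd t Ht) as (H1&H2&H3&H4). rewrite (acc_eq a b); auto.
unfold mk3. f_equal; [f_equal|]; apply is_derive_unique; auto_derive; try (repeat split; auto; fail); eta_clean; ring.
Qed.

Ltac fix_sqrt X := repeat match goal with |- context [sqrt ?e] =>
  let E := fresh in assert (E : e = X) by ring; progress rewrite E; clear E end.

Lemma Lu'_eq alpha x1 x2 y1 y2 : 0 < y1 ^ 2 + sin x1 ^ 2 * y2 ^ 2 ->
  L_u' alpha x1 x2 y1 y2 = Rpower x1 alpha * (y1 / sqrt (y1 ^ 2 + sin x1 ^ 2 * y2 ^ 2)).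
Proof.
intros H. unfold L_u', Lag. apply is_derive_unique. auto_derive. lra. fix_sqrt (y1 ^ 2 + sin x1 ^ 2 * y2 ^ 2). field.
apply Rgt_not_eq, sqrt_lt_R0; lra.
Qed.

Lemma Lv'_eq alpha x1 x2 y1 y2 : 0 < y1 ^ 2 + sin x1 ^ 2 * y2 ^ 2 ->
  L_v' alpha x1 x2 y1 y2 = Rpower x1 alpha * (sin x1 ^ 2 * y2 / sqrt (y1 ^ 2 + sin x1 ^ 2 * y2 ^ 2)).
Proof.
intros H. unfold L_v', Lag. apply is_derive_unique. auto_derive. lra. fix_sqrt (y1 ^ 2 + sin x1 ^ 2 * y2 ^ 2). field.
apply Rgt_not_eq, sqrt_lt_R0; lra.
Qed.

Lemma Lv_eq alpha x1 x2 y1 y2 : L_v alpha x1 x2 y1 y2 = 0.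
Proof. unfold L_v, Lag. apply Derive_const. Qed.

Lemma Lu_eq alpha x1 x2 y1 y2 : 0 < x1 -> 0 < y1 ^ 2 + sin x1 ^ 2 * y2 ^ 2 ->
  L_u alpha x1 x2 y1 y2 = Rpower x1 alpha * (alpha / x1) * sqrt (y1 ^ 2 + sin x1 ^ 2 * y2 ^ 2)
     + Rpower x1 alpha * (sin x1 * cos x1 * y2 ^ 2 / sqrt (y1 ^ 2 + sin x1 ^ 2 * y2 ^ 2)).
Proof.
intros H0 H. unfold L_u, Lag, Rpower. apply is_derive_unique. auto_derive. split; [lra|split;[lra|auto]]. fix_sqrt (y1 ^ 2 + sin x1 ^ 2 * y2 ^ 2). field.
split; [apply Rgt_not_eq, sqrt_lt_R0; lra| lra].
Qed.

Lemma alg_dot (c s cv sv u1 v1 : R): cv^2+sv^2=1 -> s^2+c^2=1 ->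
  dot3 (mk3 (c * cv * u1 - s * sv * v1) (c * sv * u1 + s * cv * v1) (- s * u1))
       (mk3 (c * cv * u1 - s * sv * v1) (c * sv * u1 + s * cv * v1) (- s * u1))
  = u1^2 + s^2 * v1^2.
Proof.
intros H1 H2. unfold dot3, mk3, vx, vy, vz; simpl.
apply Rminus_diag_uniq.
transitivity ((c^2*u1^2 + s^2*v1^2)*(cv^2+sv^2-1) + u1^2*(s^2+c^2-1)); [ring|].
rewrite H1, H2; ring.
Qed.

Lemma alg_N1 (c s cv sv u1 v1 u2 v2 : R): cv^2+sv^2=1 -> s^2+c^2=1 ->
  dot3 (mk3
   (- s * u1 * cv * u1 - c * sv * v1 * u1 + c * cv * u2
     - (c * u1 * sv * v1 + s * cv * v1 * v1 + s * sv * v2))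
   (- s * u1 * sv * u1 + c * cv * v1 * u1 + c * sv * u2
     + c * u1 * cv * v1 - s * sv * v1 * v1 + s * cv * v2)
   (- c * u1 * u1 - s * u2))
   (cross3 (mk3 (c * cv * u1 - s * sv * v1) (c * sv * u1 + s * cv * v1) (- s * u1))
           (mk3 (s * cv) (s * sv) c))
  = s*v1*u2 - s^2*c*v1^3 - s*u1*v2 - 2*c*u1^2*v1.
Proof.
intros H1 H2. unfold dot3, cross3, mk3, vx, vy, vz; simpl.
apply Rminus_diag_uniq.
transitivity (((-2*c*s^2*u1^2*v1) + (c^2*s*v1*u2) + (-1*c*s^2*v1^3) + (-2*c^3*u1^2*v1) + (-1*s^3*u1*v2) + (-1*c^2*s*u1*v2) + (s^3*v1*u2))*(cv^2+sv^2-1)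
  + ((s*v1*u2) + (-2*c*u1^2*v1) + (-1*s*u1*v2))*(s^2+c^2-1)); [ring|].
rewrite H1, H2; ring.
Qed.

Lemma alg_N2 (c s cv sv u1 v1 : R): cv^2+sv^2=1 -> s^2+c^2=1 ->
  dot3 (cross3 (mk3 (c * cv * u1 - s * sv * v1) (c * sv * u1 + s * cv * v1) (- s * u1))
           (mk3 (s * cv) (s * sv) c))
       (mk3 (c * cv) (c * sv) (- s))
  = s * v1.
Proof.
intros H1 H2. unfold dot3, cross3, mk3, vx, vy, vz; simpl.
apply Rminus_diag_uniq.
transitivity ((c^2*s*v1 + s^3*v1)*(cv^2+sv^2-1) + (s*v1)*(s^2+c^2-1)); [ring|].
rewrite H1, H2; ring.
Qed.

Lemma dot_scal_r A k B : dot3 A (scal3 k B) = k * dot3 A B.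
Proof. unfold dot3, scal3, mk3, vx, vy, vz; simpl; ring. Qed.
Lemma dot_scal_l A k B : dot3 (scal3 k B) A = k * dot3 B A.
Proof. unfold dot3, scal3, mk3, vx, vy, vz; simpl; ring. Qed.

Lemma trig1 x : cos x ^ 2 + sin x ^ 2 = 1.
Proof. rewrite Rplus_comm. pose proof (sin2_cos2 x). unfold Rsqr in H. rewrite <- H. ring. Qed.
Lemma trig2 x : sin x ^ 2 + cos x ^ 2 = 1.
Proof. pose proof (sin2_cos2 x). unfold Rsqr in H. rewrite <- H. ring. Qed.

Lemma norm_vel u v t : ex_derive u t -> ex_derive v t ->
  norm3 (vel u v t) = sqrt (Derive u t ^ 2 + sin (u t) ^ 2 * Derive v t ^ 2).
Proof.
intros H1 H2. unfold norm3. rewrite vel_eq; auto. rewrite alg_dot; auto using trig1, trig2.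
Qed.

Lemma arg_pos u v t : ex_derive u t -> ex_derive v t -> norm3 (vel u v t) <> 0 ->
  0 < Derive u t ^ 2 + sin (u t) ^ 2 * Derive v t ^ 2.
Proof.
intros H1 H2 H3. rewrite norm_vel in H3; auto.
assert (0 <= Derive u t ^ 2 + sin (u t) ^ 2 * Derive v t ^ 2) by nra.
destruct H; auto. rewrite <- H in H3. rewrite sqrt_0 in H3. lra.
Qed.

Lemma EL1 alpha a b u v t : (forall t, a < t < b ->
     ex_derive u t /\ ex_derive (Derive u) t /\
     ex_derive v t /\ ex_derive (Derive v) t) ->
  (forall t, a < t < b -> 0 < u t < PI) ->
  (forall t, a < t < b -> norm3 (vel u v t) <> 0) -> a < t < b ->
  let u0 := u t in let s := sin (u t) in let c := cos (u t) in
  let u1 := Derive u t in let v1 := Derive v t in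
  let u2 := Derive (Derive u) t in let v2 := Derive (Derive v) t in
  let P := Rpower u0 alpha in
  let W := sqrt (u1 ^ 2 + s ^ 2 * v1 ^ 2) in
  is_derive (fun r => L_u' alpha (u r) (v r) (Derive u r) (Derive v r)) t
    (P*(alpha*(u1/u0) * u1/W + u2/W - u1*(u1*u2 + s*c*u1*v1^2 + s^2*v1*v2)/W^3)) /\
  is_derive (fun r => L_v' alpha (u r) (v r) (Derive u r) (Derive v r)) t
    (P*(alpha*(u1/u0) * s^2*v1/W + 2*s*c*u1*v1/W + s^2*v2/W
               - s^2*v1*(u1*u2 + s*c*u1*v1^2 + s^2*v1*v2)/W^3)).
Proof.
intros Hd Hu Hr Ht u0 s c u1 v1 u2 v2 P W.
destruct (Hd t Ht) as (H1&H2&H3&H4).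
assert (Ha : 0 < u1 ^ 2 + s ^ 2 * v1 ^ 2) by (apply arg_pos; auto).
assert (HW : 0 < W) by (apply sqrt_lt_R0; auto).
assert (Hu0 : 0 < u0) by (apply Hu; auto).
subst u0 s c u1 v1 u2 v2 P W.
split.
- apply (is_derive_ext_loc (fun r => exp (alpha * ln (u r)) * (Derive u r / sqrt (Derive u r ^ 2 + sin (u r) ^ 2 * Derive v r ^ 2)))).
  + generalize (loc_int a b t Ht); apply filter_imp. intros r Hr'.
    destruct (Hd r Hr') as (G1&G2&G3&G4).
    rewrite Lu'_eq; [reflexivity|]. apply arg_pos; auto.
  + auto_derive; eta_clean; fix_sqrt (Derive u t ^ 2 + sin (u t) ^ 2 * Derive v t ^ 2).
    * repeat split; auto; lra.
    * unfold Rpower. field. lra.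
- apply (is_derive_ext_loc (fun r => exp (alpha * ln (u r)) * (sin (u r) ^ 2 * Derive v r / sqrt (Derive u r ^ 2 + sin (u r) ^ 2 * Derive v r ^ 2)))).
  + generalize (loc_int a b t Ht); apply filter_imp. intros r Hr'.
    destruct (Hd r Hr') as (G1&G2&G3&G4).
    rewrite Lv'_eq; [reflexivity|]. apply arg_pos; auto.
  + auto_derive; eta_clean; fix_sqrt (Derive u t ^ 2 + sin (u t) ^ 2 * Derive v t ^ 2).
    * repeat split; auto; lra.
    * unfold Rpower. field. lra.
Qed.
Lemma alg_EL al u0 s c u1 u2 v1 v2 P W : 0 < u0 -> 0 < W -> W * W = u1^2 + s^2 * v1^2 ->
  P <> 0 -> s <> 0 ->
  let Kn := s*v1*u2 - s^2*c*v1^3 - s*u1*v2 - 2*c*u1^2*v1 in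
  let D1 := P*(al*(u1/u0) * u1/W + u2/W - u1*(u1*u2 + s*c*u1*v1^2 + s^2*v1*v2)/W^3) in
  let D2 := P*(al*(u1/u0) * s^2*v1/W + 2*s*c*u1*v1/W + s^2*v2/W
               - s^2*v1*(u1*u2 + s*c*u1*v1^2 + s^2*v1*v2)/W^3) in
  let R1 := P*(al/u0)*W + P*(s*c*v1^2/W) in
  ((R1 = D1 /\ 0 = D2) <-> (/W * Kn) / W^2 = al * (/W * (s*v1)) / u0).
Proof.
intros H0 HW HWW HP Hs Kn D1 D2 R1.
set (Kd := Kn - al*s*v1*W^2/u0).
assert (E1 : D1 - R1 = P*s*v1*Kd/W^3).
{ apply Rminus_diag_uniq.
  transitivity (P*(W*W - (u1^2+s^2*v1^2))*(-al*W^2/u0 + u2 - s*c*v1^2)/W^3).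
  - unfold D1, R1, Kd, Kn. field. lra.
  - rewrite HWW. unfold Rdiv. ring. }
assert (E2 : D2 = - (P*s*u1*Kd/W^3)).
{ apply Rminus_diag_uniq.
  transitivity (P*(W*W - (u1^2+s^2*v1^2))*(2*s*c*u1*v1 + s^2*v2)/W^3).
  - unfold D2, Kd, Kn. field. lra.
  - rewrite HWW. unfold Rdiv. ring. }
assert (E3 : (/W * Kn) / W^2 - al * (/W * (s*v1)) / u0 = Kd / W^3).
{ unfold Kd. field. lra. }
assert (HW3 : W^3 <> 0) by (apply pow_nonzero; lra).
split.
- intros [H1 H2].
  assert (Kd = 0).
  { destruct (Req_dec Kd 0) as [|HK]; auto. exfalso.
    assert (Hv : v1 = 0).
    { assert (P*s*v1*Kd/W^3 = 0) by (rewrite <- E1; lra).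
      unfold Rdiv in H. apply Rmult_integral in H. destruct H as [H|H].
      2:{ exfalso; apply Rinv_neq_0_compat in HW3; auto. }
      apply Rmult_integral in H. destruct H as [H|H]; [|contradiction].
      apply Rmult_integral in H. destruct H as [H|H]; auto.
      apply Rmult_integral in H. destruct H as [H|H]; contradiction. }
    assert (Hu : u1 = 0).
    { assert (P*s*u1*Kd/W^3 = 0) by lra.
      unfold Rdiv in H. apply Rmult_integral in H. destruct H as [H|H].
      2:{ exfalso; apply Rinv_neq_0_compat in HW3; auto. }
      apply Rmult_integral in H. destruct H as [H|H]; [|contradiction].
      apply Rmult_integral in H. destruct H as [H|H]; auto.
      apply Rmult_integral in H. destruct H as [H|H]; contradiction. }
    subst. assert (W*W > 0) by nra. nra. }
  apply Rminus_diag_uniq. rewrite E3, H. unfold Rdiv; ring.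
- intros H. assert (HK : Kd = 0).
  { assert (Kd / W^3 = 0) by (rewrite <- E3; lra).
    unfold Rdiv in H1. apply Rmult_integral in H1. destruct H1 as [H1|H1]; auto.
    exfalso; apply Rinv_neq_0_compat in HW3; auto. }
  split.
  + apply Rminus_diag_uniq in E1 || idtac. assert (D1 - R1 = 0) by (rewrite E1, HK; unfold Rdiv; ring). lra.
  + rewrite E2, HK. unfold Rdiv; ring.
Qed.

Lemma deriv_iff (f : R -> R) x l l' : is_derive f x l -> (is_derive f x l' <-> l' = l).
Proof.
intros H. split.
- intros H'. rewrite <- (is_derive_unique _ _ _ H), <- (is_derive_unique _ _ _ H'); auto.
- intros ->; auto.
Qed.

Lemma pointwise alpha a b u v t : (forall t, a < t < b ->
     ex_derive u t /\ ex_derive (Derive u) t /\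
     ex_derive v t /\ ex_derive (Derive v) t) ->
  (forall t, a < t < b -> 0 < u t < PI) ->
  (forall t, a < t < b -> norm3 (vel u v t) <> 0) -> a < t < b ->
  ((is_derive (fun s => L_u' alpha (u s) (v s) (Derive u s) (Derive v s)) t
              (L_u alpha (u t) (v t) (Derive u t) (Derive v t)) /\
    is_derive (fun s => L_v' alpha (u s) (v s) (Derive u s) (Derive v s)) t
              (L_v alpha (u t) (v t) (Derive u t) (Derive v t)))
   <-> curvature u v t = alpha * dot3 (unit_normal u v t) (xi_along u v t) / dist_N u v t).
Proof.
intros Hd Hu Hr Ht.
destruct (Hd t Ht) as (H1&H2&H3&H4).
pose proof (EL1 alpha a b u v t Hd Hu Hr Ht) as HE. cbv zeta in HE. destruct HE as [E1 E2].
rewrite (deriv_iff _ _ _ _ E1), (deriv_iff _ _ _ _ E2).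
assert (Ha : 0 < Derive u t ^ 2 + sin (u t) ^ 2 * Derive v t ^ 2) by (apply arg_pos; auto).
assert (Hu0 : 0 < u t < PI) by (apply Hu; auto).
rewrite Lu_eq, Lv_eq; try lra.
unfold curvature, unit_normal, xi_along, dist_N.
rewrite norm_vel; auto.
pose proof (acc_eq2 a b u v t Hd Ht) as HA. cbv zeta in HA. rewrite HA.
rewrite vel_eq; auto. unfold curve, Psi, Psi_u.
rewrite dot_scal_r, dot_scal_l, alg_N1, alg_N2; auto using trig1, trig2.
pose proof (alg_EL alpha (u t) (sin (u t)) (cos (u t)) (Derive u t) (Derive (Derive u) t)
  (Derive v t) (Derive (Derive v) t) (Rpower (u t) alpha)
  (sqrt (Derive u t ^ 2 + sin (u t) ^ 2 * Derive v t ^ 2))) as HL.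
cbv zeta in HL. apply HL.
- lra.
- apply sqrt_lt_R0; auto.
- apply sqrt_sqrt; lra.
- unfold Rpower. apply Rgt_not_eq, exp_pos.
- apply Rgt_not_eq, sin_gt_0; lra.
Qed.

Theorem proposition3p1 (alpha a b : R) (u v : R -> R) :
  alpha <> 0 ->
  a < b ->
  (* u, v are twice differentiable on ]a,b[ *)
  (forall t, a < t < b ->
     ex_derive u t /\ ex_derive (Derive u) t /\
     ex_derive v t /\ ex_derive (Derive v) t) ->
  (* gamma avoids N (and stays in the chart 0 < u < pi where xi is defined) *)
  (forall t, a < t < b -> 0 < u t < PI) ->
  (* gamma is regular *)
  (forall t, a < t < b -> norm3 (vel u v t) <> 0) ->
  (stationary alpha a b u v <->
   forall t, a < t < b ->
     curvature u v t = alpha * dot3 (unit_normal u v t) (xi_along u v t) / dist_N u v t).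
Proof.
intros Hal Hab Hd Hu Hr. unfold stationary. split.
- intros H t Ht. apply (pointwise alpha a b u v t Hd Hu Hr Ht). auto.
- intros H t Ht. apply (pointwise alpha a b u v t Hd Hu Hr Ht). auto.
Qed.
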